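(* Let $G$ be a simple graph and let $K_{s_1},K_{s_2},\ldots,K_{s_k}$ be pairwise edge-disjoint cliques (complete subgraphs) of $G$ with $s_i\ge 3$ for all $i$. Then the independence number of the triangular signed graph $G_{\vartriangle}$ satisfies $$\alpha(G_{\vartriangle})\ge\sum_{i=1}^{k}\frac{\binom{s_i}{3}}{1+3(s_i-3)}.$$
   Context: Edges of $G$ are oriented and each triangle $\vartriangle$ of $G$ is given a cyclic orientation. The triangular signed graph $G_{\vartriangle}$ has the triangles of $G$ as vertices; two distinct triangles are adjacent if and only if they share an edge $e$ (the edge being positive if $e$ agrees with the orientations of both triangles or disagrees with both, and negative otherwise). The independence number $\alpha(G_{\vartriangle})$ is that of the underlying unsigned graph. *)

(* Defs.v *)
From HB Require Import structures.
From mathcomp Require Import all_boot all_order all_algebra.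
Set Implicit Arguments. Unset Strict Implicit. Unset Printing Implicit Defensive.

Definition simple_graph (T : finType) (e : rel T) : Prop :=
  irreflexive e /\ symmetric e.

Definition is_triangle (T : finType) (e : rel T) (t : {set T}) : bool :=
  (#|t| == 3) && [forall x in t, forall y in t, (x != y) ==> e x y].

(* Two distinct triangles are adjacent in the triangular (signed) graph iff
   they share an edge {x,y} of G.  Signs do not matter for alpha. *)
Definition tri_adj (T : finType) (e : rel T) (t1 t2 : {set T}) : bool :=
  (t1 != t2) && [exists x, exists y,
     [&& e x y, x \in t1, y \in t1, x \in t2 & y \in t2]].

Definition tri_independent (T : finType) (e : rel T) (I : {set {set T}}) : bool :=
  [forall t in I, is_triangle e t] &&
  [forall t1 in I, forall t2 in I, ~~ tri_adj e t1 t2].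

Definition alpha_tri (T : finType) (e : rel T) : nat :=
  \max_(I : {set {set T}} | tri_independent e I) #|I|.

Definition is_clique (T : finType) (e : rel T) (S : {set T}) : Prop :=
  forall x y, x \in S -> y \in S -> x != y -> e x y.

Definition edge_disjoint_cliques (T : finType) (e : rel T) (k : nat)
    (S : 'I_k -> {set T}) : Prop :=
  forall (i j : 'I_k) x y, e x y ->
    x \in S i -> y \in S i -> x \in S j -> y \in S j -> i = j.

(* Main.v *)
Require Import Defs.
From mathcomp Require Import all_boot all_order all_algebra.
From mathcomp Require Import zify.
Import GRing.Theory Num.Theory.

Lemma greedy (U : finType) (adj : rel U) (d : nat) :
  irreflexive adj -> symmetric adj -> forall A : {set U},
  (forall t, t \in A -> #|[set u in A | adj t u]| <= d) ->
  exists2 I : {set U}, I \subset A &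
    [forall t1 in I, forall t2 in I, ~~ adj t1 t2] && (#|A| <= d.+1 * #|I|).
Proof.
move=> irr sym A.
move: {2}(#|A|) (leqnn #|A|) => n; elim: n A => [|n IH] A leA hdeg.
  exists set0; first exact: sub0set.
  apply/andP; split; first by apply/forallP=> t; rewrite inE.
  by move: leA; rewrite leqn0 => /eqP ->.
case: (set_0Vmem A) => [->|[t tA]].
  exists set0; first exact: sub0set.
  apply/andP; split; first by apply/forallP=> z; rewrite inE.
  by rewrite cards0.
set N := [set u in A | adj t u].
set A' := A :\: (t |: N).
have sA' : A' \subset A by apply: subsetDl.
have tA' : t \notin A' by rewrite !inE eqxx.
have leA' : #|A'| <= n.
  have : #|A'| < #|A|.
    apply: proper_card; rewrite properEneq sA' andbT.
    by apply/eqP=> E; move: tA'; rewrite E tA.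
  lia.
have hdeg' : forall u, u \in A' -> #|[set v in A' | adj u v]| <= d.
  move=> u uA; apply: leq_trans (hdeg u (subsetP sA' u uA)).
  by apply: subset_leq_card; apply/subsetP=> v; rewrite !inE; case/andP=> h ->; move: h; case/andP=> _ ->.
have [I' sI' /andP [indI' cI']] := IH A' leA' hdeg'.
exists (t |: I').
  by apply/subsetP=> z; rewrite in_setU1 => /orP [/eqP -> // | /(subsetP sI') /(subsetP sA')].
apply/andP; split.
  have key : forall u, u \in I' -> ~~ adj t u.
    move=> u /(subsetP sI'); rewrite !inE negb_or => /andP [/andP [_ uN] uA].
    by move: uN; rewrite uA.
  apply/forallP=> t1; apply/implyP; rewrite in_setU1 => /orP [/eqP -> | h1];
  apply/forallP=> t2; apply/implyP; rewrite in_setU1 => /orP [/eqP -> | h2].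
  - by rewrite irr.
  - exact: key.
  - by rewrite sym; apply: key.
  - by move/forallP: indI' => /(_ t1); rewrite h1 /= => /forallP /(_ t2); rewrite h2.
rewrite cardsU1.
have -> : t \notin I' by apply: contra tA'; apply: (subsetP sI').
have hN : #|N| <= d by apply: hdeg.
have h1 := cardsID (t |: N) A.
have h2 : #|A :&: (t |: N)| <= #|t |: N| by apply: subset_leq_card; apply: subsetIr.
have h3 : #|t |: N| <= (t \notin N) + #|N| by rewrite cardsU1.
rewrite -/A' in h1.
have h4 : (t \notin N) <= 1 by case: (t \notin N).
nia.
Qed.

Lemma mem_bigcup_seq (I : eqType) (U : finType) (r : seq I) (F : I -> {set U}) z :
  z \in \bigcup_(i <- r) F i -> exists2 i, i \in r & z \in F i.
Proof.
elim: r => [|a r IH]; first by rewrite big_nil inE.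
rewrite big_cons inE => /orP [za | /IH [i ir zi]].
  by exists a; rewrite ?inE ?eqxx.
by exists i; rewrite // inE ir orbT.
Qed.

Lemma card_bigcup_seq (I : eqType) (U : finType) (r : seq I) (F : I -> {set U}) :
  uniq r -> (forall i j, i \in r -> j \in r -> i != j -> [disjoint F i & F j]) ->
  #|\bigcup_(i <- r) F i| = \sum_(i <- r) #|F i|.
Proof.
elim: r => [|a r IH] /=; first by rewrite !big_nil cards0.
move=> /andP [ar ur] hd.
rewrite !big_cons.
have dj : [disjoint F a & \bigcup_(i <- r) F i].
  rewrite -setI_eq0; apply/eqP/setP => z; rewrite inE in_set0.
  apply/negbTE/negP => /andP [za /mem_bigcup_seq [i ir zi]].
  have : [disjoint F a & F i].
    apply: hd; rewrite ?inE ?eqxx ?ir ?orbT //.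
    by apply: contra ar => /eqP ->.
  by rewrite -setI_eq0 => /eqP /setP /(_ z); rewrite inE za zi in_set0.
have := leq_card_setU (F a) (\bigcup_(i <- r) F i).
case=> _; rewrite dj => /eqP ->; rewrite IH //.
by move=> i j ir jr; apply: hd; rewrite inE ?ir ?jr orbT.
Qed.

Lemma deg_bound (T : finType) (e : rel T) (S : {set T}) (t : {set T}) :
  irreflexive e -> t \subset S -> #|t| = 3 ->
  #|[set u in [set u : {set T} | u \subset S & #|u| == 3] | tri_adj e t u]|
    <= 3 * (#|S| - 3).
Proof.
move=> irr tS ct.
pose f (p : T * T) := (t :\ p.1) :|: [set p.2].
have -> : 3 * (#|S| - 3) = #|setX t (S :\: t)|.
  by rewrite cardsX ct cardsD (setIidPr tS) ct.
apply: leq_trans (leq_imset_card f _); apply: subset_leq_card.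
apply/subsetP => u; rewrite !inE => /andP [/andP [uS /eqP cu]].
case/andP => ntu /existsP [x /existsP [y /and5P [exy xt yt xu yu]]].
have xy : x != y by apply: contraTneq exy => ->; rewrite irr.
have c2 : #|t :&: u| = 2.
  apply/eqP; rewrite eqn_leq; apply/andP; split.
    rewrite leqNgt; apply/negP => h.
    have e1 : t :&: u == t by rewrite eqEcard subsetIl ct; lia.
    have e2 : t :&: u == u by rewrite eqEcard subsetIr cu; lia.
    by move: ntu; rewrite -(eqP e1) (eqP e2) eqxx.
  have : [set x; y] \subset t :&: u.
    by apply/subsetP => z; rewrite !inE => /orP [] /eqP ->; rewrite ?xt ?xu ?yt ?yu.
  by move/subset_leq_card; rewrite cards2 xy.
have c1 : #|t :\: u| == 1 by have := cardsID u t; rewrite c2 ct; lia.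
have c1' : #|u :\: t| == 1 by have := cardsID t u; rewrite setIC c2 cu; lia.
case/cards1P: c1 => a Ha; case/cards1P: c1' => b Hb.
apply/imsetP; exists (a, b).
  have : a \in t :\: u by rewrite Ha set11.
  have : b \in u :\: t by rewrite Hb set11.
  rewrite !inE => /andP [bt bu] /andP [_ at_].
  by rewrite at_ bt (subsetP uS).
apply/setP => z; move/setP: Ha => /(_ z); move/setP: Hb => /(_ z); rewrite /f /= !inE.
by case: (z \in t); case: (z \in u) => /= <- <-.
Qed.

Local Open Scope ring_scope.
Import Order.TTheory.

Theorem lemma5p7 (T : finType) (e : rel T) (k : nat) (S : 'I_k -> {set T}) :
  simple_graph e ->
  (forall i, is_clique e (S i)) ->
  (forall i, (3 <= #|S i|)%N) ->
  edge_disjoint_cliques e S ->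
  \sum_(i < k) ('C(#|S i|, 3))%:R / (1 + 3 * (#|S i| - 3))%:R
    <= (alpha_tri e)%:R :> rat.
Proof.
move=> [irr sym] cl s3 ed.
pose A i := [set u : {set T} | u \subset S i & #|u| == 3].
have irrA : irreflexive (tri_adj e) by move=> t; rewrite /tri_adj eqxx.
have symA : symmetric (tri_adj e).
  move=> t1 t2; rewrite /tri_adj eq_sym; congr (_ && _).
  apply/existsP/existsP => [] [x /existsP [y /and5P [h1 h2 h3 h4 h5]]];
    by exists x; apply/existsP; exists y; rewrite h1 h2 h3 h4 h5.
have ex : forall i, exists I : {set {set T}}, I \subset A i /\
    [forall t1 in I, forall t2 in I, ~~ tri_adj e t1 t2] /\
    (#|A i| <= (3 * (#|S i| - 3)).+1 * #|I|)%N.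
  move=> i.
  have hd : forall t, t \in A i -> (#|[set u in A i | tri_adj e t u]| <= 3 * (#|S i| - 3))%N.
    move=> t; rewrite inE => /andP [tS /eqP ct].
    exact: (deg_bound _ _ _ _ irr tS ct).
  have [I sI /andP [h1 h2]] := @greedy _ (tri_adj e) (3 * (#|S i| - 3)) irrA symA (A i) hd.
  by exists I.
have [F hF] := fin_all_exists ex.
have two : forall t : {set T}, #|t| = 3%N -> exists x y, [/\ x \in t, y \in t & x != y].
  move=> t ct; have : (1 < #|t|)%N by rewrite ct.
  by move/card_gt1P.
have tri_same : forall i j t, t \in A i -> t \in A j -> i = j.
  move=> i j t; rewrite !inE => /andP [ti /eqP ct] /andP [tj _].
  have [x [y [xt yt xy]]] := two t ct.
  apply: (ed i j x y); first exact: (cl i x y (subsetP ti x xt) (subsetP ti y yt) xy).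
  - exact: (subsetP ti x xt).
  - exact: (subsetP ti y yt).
  - exact: (subsetP tj x xt).
  - exact: (subsetP tj y yt).
pose I := \bigcup_(i < k) F i.
have cardI : #|I| = (\sum_(i < k) #|F i|)%N.
  apply: card_bigcup_seq; first exact: index_enum_uniq.
  move=> i j _ _ nij; rewrite -setI_eq0; apply/eqP/setP => t; rewrite !inE.
  apply/negbTE/negP => /andP [ti tj].
  have [sI _] := hF i; have [sJ _] := hF j.
  by move: nij; rewrite (tri_same i j t (subsetP sI t ti) (subsetP sJ t tj)) eqxx.
have indI : tri_independent e I.
  apply/andP; split.
    apply/forallP => t; apply/implyP => /bigcupP [i _ ti].
    have [sI _] := hF i; move: (subsetP sI t ti); rewrite inE => /andP [tS ct].
    rewrite /is_triangle ct /=; apply/forallP => x; apply/implyP => xt.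
    apply/forallP => y; apply/implyP => yt; apply/implyP => xy.
    exact: cl (subsetP tS x xt) (subsetP tS y yt) xy.
  apply/forallP => t1; apply/implyP => /bigcupP [i _ t1i].
  apply/forallP => t2; apply/implyP => /bigcupP [j _ t2j].
  have [sI [indi _]] := hF i; have [sJ _] := hF j.
  case: (eqVneq i j) => [eij | nij].
    subst j; by move/forallP: indi => /(_ t1); rewrite t1i /= => /forallP /(_ t2); rewrite t2j.
  apply/negP => /andP [_ /existsP [x /existsP [y /and5P [exy x1 y1 x2 y2]]]].
  move: (subsetP sI t1 t1i) (subsetP sJ t2 t2j); rewrite !inE => /andP [s1 _] /andP [s2 _].
  move: nij; rewrite (ed i j x y exy (subsetP s1 x x1) (subsetP s1 y y1) (subsetP s2 x x2) (subsetP s2 y y2)).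
  by rewrite eqxx.
have alphaI : (#|I| <= alpha_tri e)%N.
  by rewrite /alpha_tri; apply: (@leq_bigmax_cond _ (fun J => tri_independent e J) (fun J => #|J|) I indI).
apply: le_trans (_ : (#|I|)%:R <= _); last by rewrite ler_nat.
rewrite cardI natr_sum; apply: ler_sum => i _.
have [_ [_ ci]] := hF i.
have -> : 'C(#|S i|, 3) = #|A i| by rewrite cards_draws.
rewrite ler_pdivrMr ?ltr0n // -natrM ler_nat mulnC.
by rewrite add1n.
Qed.
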